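(* Let $m\in(0,1]$ and assume $\alpha>\frac{1}{Kh}$, $\theta>\theta_2$ and $c_2<c<c_1$. Then $G>0$, $H>0$, and the interior fixed point $E^*=(x^*,y^* )$ of the discrete map (DFP) is stable (both Jacobian eigenvalues have modulus $<1$) whenever $s<\min\{s_4,s_5\}$, where $$s_4=\Bigl(\frac{m\Gamma(m)G}{H}\Bigr)^{1/m},\qquad s_5=\Bigl(\frac{2m\Gamma(m)}{G}\Bigr)^{1/m}.$$
   Context: Fix parameters $r,K,\alpha,h,d>0$, $0<\theta<1$, $0<c<1$, a fractional order $m\in(0,1]$ and a step size $s>0$; put $S=\frac{s^m}{m\Gamma(m)}$. The discretized fractional-order system (DFP) is the map $$x_{n+1}=x_n+S\,x_n\Bigl(r\bigl(1-\tfrac{x_n}{K}\bigr)-\frac{\alpha(1-c)y_n}{1+\alpha(1-c)hx_n}\Bigr),\qquad y_{n+1}=y_n+S\,y_n\Bigl(\frac{\theta\alpha(1-c)x_n}{1+\alpha(1-c)hx_n}-d\Bigr).$$ Its interior fixed point is $E^*=(x^*,y^* )$ with $x^*=\frac{d}{\alpha(1-c)(\theta-hd)}$, $y^*=\frac{r(K-x^* )\{1+\alpha h(1-c)x^*\}}{\alpha K(1-c)}$. Define $G=\frac{rx^*}{K\theta}\bigl[\theta+hd-\alpha hK(1-c)(\theta-hd)\bigr]$, $H=\frac{rx^*(\theta-hd)}{K\theta}\bigl[\alpha K(1-c)(\theta-hd)-d\bigr]$. Thresholds: $c_1=1-\frac{d}{\alpha K(\theta-hd)}$, $c_2=1-\frac{\theta+hd}{\alpha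 Kh(\theta-hd)}$, $\theta_2=\frac{hd(\alpha Kh+1)}{\alpha Kh-1}$. *)

(* Defs.v *)
From Stdlib Require Import Reals Lra Arith Factorial.
Open Scope R_scope.

(* Stdlib has no Gamma function; [is_Gamma m g] says g = Gamma(m). *)
Definition gauss_seq (m : R) (n : nat) : R :=
  INR (Factorial.fact n) * Rpower (INR n) m / prod_f_R0 (fun k => m + INR k) n.

Definition is_Gamma (m g : R) : Prop := Un_cv (gauss_seq m) g.

Definition Sstep (m s g : R) : R := Rpower s m / (m * g).

Definition dfp_x (r K alpha h c S : R) (x y : R) : R :=
  x + S * x * (r * (1 - x / K) - alpha * (1 - c) * y / (1 + alpha * (1 - c) * h * x)).

Definition dfp_y (alpha h d theta c S : R) (x y : R) : R :=
  y + S * y * (theta * alpha * (1 - c) * x / (1 + alpha * (1 - c) * h * x) - d).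

Definition xstar (alpha h d theta c : R) : R :=
  d / (alpha * (1 - c) * (theta - h * d)).

Definition ystar (r K alpha h d theta c : R) : R :=
  let xs := xstar alpha h d theta c in
  r * (K - xs) * (1 + alpha * h * (1 - c) * xs) / (alpha * K * (1 - c)).

Definition Gq (r K alpha h d theta c : R) : R :=
  r * xstar alpha h d theta c / (K * theta) *
  (theta + h * d - alpha * h * K * (1 - c) * (theta - h * d)).

Definition Hq (r K alpha h d theta c : R) : R :=
  r * xstar alpha h d theta c * (theta - h * d) / (K * theta) *
  (alpha * K * (1 - c) * (theta - h * d) - d).

Definition cthr1 (K alpha h d theta : R) : R := 1 - d / (alpha * K * (theta - h * d)).
Definition cthr2 (K alpha h d theta : R) : R :=
  1 - (theta + h * d) / (alpha * K * h * (theta - h * d)).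
Definition theta2 (K alpha h d : R) : R := h * d * (alpha * K * h + 1) / (alpha * K * h - 1).

Definition is_jacobian (F1 F2 : R -> R -> R) (x0 y0 j11 j12 j21 j22 : R) : Prop :=
  derivable_pt_lim (fun u => F1 u y0) x0 j11 /\
  derivable_pt_lim (fun v => F1 x0 v) y0 j12 /\
  derivable_pt_lim (fun u => F2 u y0) x0 j21 /\
  derivable_pt_lim (fun v => F2 x0 v) y0 j22.

(* ---------- complex eigenvalues of a real 2x2 matrix ----------
   A complex number is a pair (re, im). *)
Definition cadd (z w : R * R) : R * R := (fst z + fst w, snd z + snd w).
Definition csub (z w : R * R) : R * R := (fst z - fst w, snd z - snd w).
Definition cmul (z w : R * R) : R * R :=
  (fst z * fst w - snd z * snd w, fst z * snd w + snd z * fst w).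
Definition creal (a : R) : R * R := (a, 0).
Definition cmod (z : R * R) : R := sqrt (fst z ^ 2 + snd z ^ 2).

Definition is_eigenvalue (j11 j12 j21 j22 : R) (lam : R * R) : Prop :=
  csub (cmul (csub (creal j11) lam) (csub (creal j22) lam))
       (creal (j12 * j21)) = (0, 0).

(* Main.v *)
Require Import Defs.
From Stdlib Require Import Reals.
From Stdlib Require Import Lra Psatz Arith Factorial Lia.
From Coquelicot Require Import Coquelicot.
Open Scope R_scope.

Lemma ln_ge_1 (t : R) : 0 < t -> 1 + ln t <= t.
Proof. intro Ht. pose proof (exp_ineq1_le (ln t)). rewrite exp_ln in H; lra. Qed.

Lemma prod_pos m n : 0 < m -> 0 < prod_f_R0 (fun k => m + INR k) n.
Proof.
  intro Hm; induction n.
  - simpl. lra.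
  - change (0 < prod_f_R0 (fun k => m + INR k) n * (m + INR (S n))).
    apply Rmult_lt_0_compat; auto. pose proof (pos_INR (S n)); lra.
Qed.

Lemma gauss_step m n : 0 < m -> (1 <= n)%nat -> gauss_seq m n <= gauss_seq m (S n).
Proof.
  intros Hm Hn. unfold gauss_seq.
  assert (HP := prod_pos m n Hm).
  change (prod_f_R0 (fun k => m + INR k) (S n)) with
    (prod_f_R0 (fun k => m + INR k) n * (m + INR (S n))).
  rewrite fact_simpl, mult_INR.
  assert (Hn0 : 1 <= INR n) by (apply (le_INR 1); auto).
  rewrite S_INR in *.
  assert (HF : 0 < INR (fact n)) by (apply lt_0_INR, lt_O_fact).
  set (P := prod_f_R0 (fun k => m + INR k) n) in *.
  set (F := INR (fact n)) in *.
  set (x := INR n) in *.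
  assert (Hk : Rpower x m * (x + 1 + m) <= Rpower (x + 1) m * (x + 1)).
  { unfold Rpower.
    replace (m * ln (x + 1)) with (m * ln x + m * (ln (x+1) - ln x)) by ring.
    rewrite exp_plus.
    assert (Hl : 1 / (x + 1) <= ln (x + 1) - ln x).
    { pose proof (ln_ge_1 (x / (x+1)) ltac:(apply Rdiv_lt_0_compat; lra)).
      unfold Rdiv in H. rewrite ln_mult, ln_Rinv in H; try lra.
      2: apply Rinv_0_lt_compat; lra.
      assert (x * / (x+1) = 1 - 1/(x+1)) by (field; lra). lra. }
    pose proof (exp_ineq1_le (m * (ln (x+1) - ln x))).
    pose proof (exp_pos (m * ln x)).
    assert (1 + m * (1/(x+1)) <= exp (m * (ln (x + 1) - ln x))).
    { apply Rle_trans with (2 := H). apply Rplus_le_compat_l, Rmult_le_compat_l; lra. }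
    assert (Heq : x + 1 + m = (1 + m * (1 / (x + 1))) * (x + 1)) by (field; lra).
    rewrite Heq. rewrite <- Rmult_assoc.
    apply Rmult_le_compat_r; [lra|]. apply Rmult_le_compat_l; lra. }
  assert (HPm : 0 < m + (x + 1)) by lra.
  apply (Rmult_le_reg_r (P * (m + (x+1)))). apply Rmult_lt_0_compat; lra.
  replace ((x + 1) * F * Rpower (x + 1) m / (P * (m + (x + 1))) * (P * (m + (x + 1))))
    with ((x + 1) * F * Rpower (x + 1) m) by (field; lra).
  replace (F * Rpower x m / P * (P * (m + (x + 1)))) with (F * (Rpower x m * (x + 1 + m))) by (field; lra).
  replace ((x + 1) * F * Rpower (x + 1) m) with (F * (Rpower (x+1) m * (x+1))) by ring.
  apply Rmult_le_compat_l; lra.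
Qed.

Lemma gauss_lb m n : 0 < m -> (1 <= n)%nat -> 1 / (m * (m + 1)) <= gauss_seq m n.
Proof.
  intros Hm Hn. induction Hn.
  - unfold gauss_seq. simpl prod_f_R0. simpl INR. simpl fact.
    replace (INR 1) with 1 by reflexivity.
    unfold Rpower. rewrite ln_1, Rmult_0_r, exp_0. right. field. lra.
  - eapply Rle_trans; [apply IHHn|]. apply gauss_step; auto.
Qed.

Lemma gamma_pos m g : 0 < m -> is_Gamma m g -> 0 < g.
Proof.
  intros Hm Hg.
  assert (Hc : 0 < 1 / (m * (m + 1))) by (apply Rdiv_lt_0_compat; nra).
  destruct (Rlt_or_le 0 g) as [|Hle]; auto. exfalso.
  destruct (Hg (1 / (m * (m + 1)))) as [N HN]; auto.
  specialize (HN (S N) ltac:(lia)).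
  pose proof (gauss_lb m (S N) Hm ltac:(lia)).
  unfold R_dist in HN. apply Rabs_def2 in HN. lra.
Qed.

Lemma derivs (r K alpha h d theta c S : R) (HK : 0 < K) (Halpha : 0 < alpha) (Hh : 0 < h) (Hd : 0 < d)
  (Htheta0 : 0 < theta) (Hc1 : c < 1) (HD : 0 < theta - h*d) (Hr : 0 < r):
  let xs := xstar alpha h d theta c in
  let ys := ystar r K alpha h d theta c in
  derivable_pt_lim (fun u => dfp_x r K alpha h c S u ys) xs (1 - S * Gq r K alpha h d theta c) /\
  derivable_pt_lim (fun v => dfp_x r K alpha h c S xs v) ys (- S * d / theta) /\
  derivable_pt_lim (fun u => dfp_y alpha h d theta c S u ys) xs (S * Hq r K alpha h d theta c * theta / d) /\
  derivable_pt_lim (fun v => dfp_y alpha h d theta c S xs v) ys 1.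
Proof.
  intros xs ys.
  assert (Hxs : 0 < xs).
  { unfold xs, xstar. apply Rdiv_lt_0_compat; auto. apply Rmult_lt_0_compat; [nra|lra]. }
  assert (Hden : 1 + alpha * (1 - c) * h * xs <> 0).
  { assert (H1c : 0 < 1 - c) by lra.
    pose proof (Rmult_lt_0_compat _ _ (Rmult_lt_0_compat _ _ (Rmult_lt_0_compat _ _ Halpha H1c) Hh) Hxs). lra. }
  repeat split; apply is_derive_Reals; [unfold dfp_x|unfold dfp_x|unfold dfp_y|unfold dfp_y];
    auto_derive; try exact Hden; try (unfold Gq, Hq, ys, ystar; fold xs; unfold xs, xstar; field; repeat split; lra).
  all: exact I.
Qed.

Theorem theorem3p1
  (r K alpha h d theta c m s g : R)
  (Hr : 0 < r) (HK : 0 < K) (Halpha : 0 < alpha) (Hh : 0 < h) (Hd : 0 < d)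
  (Htheta0 : 0 < theta) (Htheta1 : theta < 1)
  (Hc0 : 0 < c) (Hc1 : c < 1)
  (Hm0 : 0 < m) (Hm1 : m <= 1) (Hs : 0 < s)
  (Hg : is_Gamma m g)
  (Halpha_gt : alpha > 1 / (K * h))
  (Htheta_gt : theta > theta2 K alpha h d)
  (Hc_lo : cthr2 K alpha h d theta < c) (Hc_hi : c < cthr1 K alpha h d theta) :
  let G := Gq r K alpha h d theta c in
  let H := Hq r K alpha h d theta c in
  let S := Sstep m s g in
  let s4 := Rpower (m * g * G / H) (1 / m) in
  let s5 := Rpower (2 * m * g / G) (1 / m) in
  0 < G /\ 0 < H /\
  (s < Rmin s4 s5 ->
   forall j11 j12 j21 j22 : R,
     is_jacobian (dfp_x r K alpha h c S) (dfp_y alpha h d theta c S)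
       (xstar alpha h d theta c) (ystar r K alpha h d theta c)
       j11 j12 j21 j22 ->
     forall lam : R * R, is_eigenvalue j11 j12 j21 j22 lam -> cmod lam < 1).
Proof.
  intros G H S s4 s5.
  assert (Hgp : 0 < g) by (apply (gamma_pos m); auto).
  assert (HKh : 1 < alpha * K * h).
  { unfold Rdiv in Halpha_gt. rewrite Rmult_1_l in Halpha_gt.
    apply (Rmult_lt_compat_r (K * h)) in Halpha_gt; [|nra].
    rewrite Rinv_l in Halpha_gt; nra. }
  assert (HD : 0 < theta - h * d).
  { unfold theta2 in Htheta_gt.
    apply (Rmult_lt_compat_r (alpha * K * h - 1)) in Htheta_gt; [|lra].
    unfold Rdiv in Htheta_gt. rewrite Rmult_assoc, Rinv_l in Htheta_gt; nra. }
  set (D := theta - h * d) in *.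
  assert (H1c : 0 < 1 - c) by lra.
  assert (Ha : 0 < alpha * (1 - c)) by nra.
  assert (HaD : 0 < alpha * (1 - c) * D) by nra.
  assert (HaKD : d < alpha * (1 - c) * K * D).
  { unfold cthr1 in Hc_hi. fold D in Hc_hi.
    assert (H0 : d / (alpha * K * D) < 1 - c) by lra.
    apply (Rmult_lt_compat_r (alpha * K * D)) in H0; [|nra].
    replace (d / (alpha * K * D) * (alpha * K * D)) with d in H0
      by (field; repeat split; lra). nra. }
  assert (HG2 : alpha * h * K * (1 - c) * D < theta + h * d).
  { unfold cthr2 in Hc_lo. fold D in Hc_lo.
    assert (H0 : 1 - c < (theta + h * d) / (alpha * K * h * D)) by lra.
    apply (Rmult_lt_compat_r (alpha * K * h * D)) in H0; [|nra].
    replace ((theta + h * d) / (alpha * K * h * D) * (alpha * K * h * D)) with (theta + h * d) in H0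
      by (field; repeat split; lra). nra. }
  assert (Hxs : 0 < xstar alpha h d theta c).
  { unfold xstar. fold D. apply Rdiv_lt_0_compat; auto. }
  assert (HGp : 0 < G).
  { unfold G, Gq. fold D. apply Rmult_lt_0_compat; [|lra].
    apply Rdiv_lt_0_compat; nra. }
  assert (HHp : 0 < H).
  { unfold H, Hq. fold D. apply Rmult_lt_0_compat; [|nra].
    apply Rdiv_lt_0_compat; [|nra]. apply Rmult_lt_0_compat; nra. }
  split; [exact HGp|]. split; [exact HHp|].
  intros Hsmin j11 j12 j21 j22 Hjac lam Heig.
  assert (Hs4 : s < s4) by (pose proof (Rmin_l s4 s5); lra).
  assert (Hs5 : s < s5) by (pose proof (Rmin_r s4 s5); lra).
  assert (Hpow : forall a, 0 < a -> Rpower (Rpower a (1 / m)) m = a).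
  { intros a0 Ha0. rewrite Rpower_mult. replace (1 / m * m) with 1 by (field; lra).
    apply Rpower_1; auto. }
  assert (Hsp : 0 < Rpower s m) by (unfold Rpower; apply exp_pos).
  assert (HS0 : 0 < S) by (unfold S, Sstep; apply Rdiv_lt_0_compat; nra).
  assert (Hmg : 0 < m * g) by nra.
  assert (HmgG : 0 < m * g * G) by nra.
  assert (H2mg : 0 < 2 * m * g) by nra.
  assert (HS4 : S * H < G).
  { assert (H0 : Rpower s m < m * g * G / H).
    { rewrite <- (Hpow (m * g * G / H)) by (apply Rdiv_lt_0_compat; nra).
      apply Rlt_Rpower_l; try split; auto. }
    unfold S, Sstep.
    apply (Rmult_lt_compat_r (H / (m * g))) in H0; [|apply Rdiv_lt_0_compat; nra].
    replace (m * g * G / H * (H / (m * g))) with G in H0 by (field; lra).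
    replace (Rpower s m / (m * g) * H) with (Rpower s m * (H / (m * g))) by (field; lra).
    exact H0. }
  assert (HS5 : S * G < 2).
  { assert (H0 : Rpower s m < 2 * m * g / G).
    { rewrite <- (Hpow (2 * m * g / G)) by (apply Rdiv_lt_0_compat; nra).
      apply Rlt_Rpower_l; try split; auto. }
    unfold S, Sstep.
    apply (Rmult_lt_compat_r (G / (m * g))) in H0; [|apply Rdiv_lt_0_compat; nra].
    replace (2 * m * g / G * (G / (m * g))) with 2 in H0 by (field; lra).
    replace (Rpower s m / (m * g) * G) with (Rpower s m * (G / (m * g))) by (field; lra).
    exact H0. }
  destruct (derivs r K alpha h d theta c S) as (D11 & D12 & D21 & D22); auto.
  destruct Hjac as (J11 & J12 & J21 & J22).
  pose proof (uniqueness_limite _ _ _ _ J11 D11) as E11.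
  pose proof (uniqueness_limite _ _ _ _ J12 D12) as E12.
  pose proof (uniqueness_limite _ _ _ _ J21 D21) as E21.
  pose proof (uniqueness_limite _ _ _ _ J22 D22) as E22.
  fold G H in E11, E21.
  assert (E1221 : j12 * j21 = - (S * S * H)).
  { rewrite E12, E21. field. lra. }
  destruct lam as [p q].
  unfold is_eigenvalue, csub, cmul, creal in Heig. simpl in Heig.
  injection Heig as Hre Him.
  rewrite E11, E22 in Hre, Him. rewrite E1221 in Hre.
  clearbody s4 s5 S G H.
  set (T := S * G) in *.
  assert (HU : S * S * H < T) by (unfold T; nra).
  assert (HU0 : 0 < S * S * H) by (apply Rmult_lt_0_compat; [apply Rmult_lt_0_compat|]; auto).
  set (U := S * S * H) in *.
  assert (HT0 : 0 < T) by (unfold T; nra).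
  unfold cmod; cbn [fst snd].
  apply Rlt_le_trans with (sqrt 1); [|rewrite sqrt_1; lra].
  apply sqrt_lt_1_alt.
  split; [nra|].
  destruct (Req_dec q 0) as [Hq0|Hq0].
  - subst q.
    assert (Hp1 : p < 1).
    { destruct (Rlt_or_le p 1) as [|Hp]; auto.
      assert (0 <= (p - 1) * (p - 1 + T)) by (apply Rmult_le_pos; lra). nra. }
    assert (Hp2 : -1 < p).
    { destruct (Rlt_or_le (-1) p) as [|Hp]; auto.
      assert (0 < (1 - T - p) * (1 - p)) by (apply Rmult_lt_0_compat; lra). nra. }
    nra.
  - assert (Hp : p = 1 - T / 2).
    { assert (H0 : q * (2 - T - 2 * p) = 0) by nra.
      apply Rmult_integral in H0. destruct H0; [contradiction|lra]. }
    subst p. nra.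
Qed.
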